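(* For the asynchronous Sinkhorn iteration described in the context, initialized with $v^{(0)}=1_Y$ (all ones), and any $q_{\mathrm{target}}\in(0,1)$, there exists $n\le 2+\frac{C}{\varepsilon(1-q_{\mathrm{target}})}$ with $q^{(n)}\ge q_{\mathrm{target}}$, where $C=\max_{x,y}c(x,y)$. Moreover, $\langle u^{(\ell)},\mu\rangle\le\exp(C/\varepsilon)$ for all $\ell\ge1$.
   Context: $X,Y$ finite sets, $\mu\in\mathcal P(X)$, $\nu\in\mathcal P(Y)$ with strictly positive entries, $c\in\mathbb R_+^{X\times Y}$, $\varepsilon>0$, kernel $K(x,y)=\exp(-c(x,y)/\varepsilon)\mu(x)\nu(y)$. Asynchronous Sinkhorn iteration: given $v^{(0)}\in\mathbb R_{++}^Y$, for $\ell\ge0$: $u^{(\ell+1)}=\mu\oslash(Kv^{(\ell)})$, $\hat v^{(\ell+1)}=\nu\oslash(K^\top u^{(\ell+1)})$, $v^{(\ell+1)}=\min\{v^{(\ell)},\hat v^{(\ell+1)}\}$ componentwise, $\pi^{(\ell+1)}=\mathrm{diag}(u^{(\ell+1)})K\mathrm{diag}(v^{(\ell+1)})$, $q^{(\ell+1)}=\sum_{x,y}\pi^{(\ell+1)}(x,y)$; $\oslash$ is componentwise division. *)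

(* Defs.v *)
From HB Require Import structures.
From mathcomp Require Import all_boot all_order all_algebra.
From mathcomp Require Import all_classical all_reals all_analysis.
Set Implicit Arguments. Unset Strict Implicit. Unset Printing Implicit Defensive.
Import Order.TTheory GRing.Theory Num.Theory.
Local Open Scope ring_scope.

Section Sinkhorn.
Variables (R : realType) (X Y : finType).
Variables (mu : X -> R) (nu : Y -> R) (c : X -> Y -> R) (eps : R).

Definition kernel (x : X) (y : Y) : R := expR (- (c x y / eps)) * mu x * nu y.

Definition u_of (v : Y -> R) : X -> R :=
  fun x => mu x / (\sum_(y : Y) kernel x y * v y).

Definition vhat_of (u : X -> R) : Y -> R :=
  fun y => nu y / (\sum_(x : X) kernel x y * u x).

Definition v_next (v : Y -> R) : Y -> R :=
  fun y => Num.min (v y) (vhat_of (u_of v) y).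

Fixpoint sink_v (l : nat) : Y -> R :=
  match l with
  | 0 => fun _ => 1
  | l'.+1 => v_next (sink_v l')
  end.

(* u^{(l)} = mu ./ (K v^{(l-1)}), meaningful for l >= 1 *)
Definition sink_u (l : nat) : X -> R := u_of (sink_v l.-1).

Definition sink_pi (l : nat) (x : X) (y : Y) : R :=
  sink_u l x * kernel x y * sink_v l y.

Definition sink_q (l : nat) : R := \sum_(x : X) \sum_(y : Y) sink_pi l x y.

(* C = max_{x,y} c(x,y)  (c >= 0, so 0 is a neutral start) *)
Definition cmax : R := \big[Num.max/0]_(p : X * Y) c p.1 p.2.

End Sinkhorn.

(* Main.v *)
Require Import Defs.
From HB Require Import structures.
From mathcomp Require Import all_boot all_order all_algebra.
From mathcomp Require Import all_classical all_reals all_analysis.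
From mathcomp Require Import ring lra.
Import Order.TTheory GRing.Theory Num.Theory.
Local Open Scope ring_scope.

Set Implicit Arguments. Unset Strict Implicit.

Lemma ln_le_sub1 (R : realType) (z : R) : 0 < z -> ln z <= z - 1.
Proof.
move=> hz; have h : -1 < z - 1 by lra.
by have := le_ln1Dx h; rewrite addrC subrK.
Qed.

Lemma sum_gt0_fin (R : realType) (I : finType) (F : I -> R) (i0 : I) :
  (forall i, 0 < F i) -> 0 < \sum_i F i.
Proof.
move=> hF; rewrite (bigD1 i0) //=; apply: (lt_le_trans (hF i0)).
by rewrite lerDl; apply: sumr_ge0 => i _; exact: ltW.
Qed.

Section Proofs.
Variables (R : realType) (X Y : finType).
Variables (mu : X -> R) (nu : Y -> R) (c : X -> Y -> R) (eps : R).
Hypotheses (hmu_pos : forall x, 0 < mu x) (hmu_sum : \sum_(x : X) mu x = 1)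
  (hnu_pos : forall y, 0 < nu y) (hnu_sum : \sum_(y : Y) nu y = 1)
  (hc : forall x y, 0 <= c x y) (heps : 0 < eps).

Local Notation K := (Defs.kernel mu nu c eps).
Local Notation C := (cmax c).
Local Notation sv := (sink_v mu nu c eps).
Local Notation uof := (u_of mu nu c eps).
Local Notation vof := (vhat_of mu nu c eps).

Definition Dv (v : Y -> R) (x : X) := \sum_y K x y * v y.
Definition Tu (u : X -> R) (y : Y) := \sum_x K x y * u x.

Lemma X0 : exists x : X, true.
Proof.
case: (boolP [exists x : X, true]) => [/existsP[x _]|/existsPn h]; first by exists x.
move: hmu_sum; rewrite big1 => [|i _]; last by have := h i.
by move/eqP; rewrite eq_sym oner_eq0.
Qed.

Lemma Y0 : exists y : Y, true.
Proof.
case: (boolP [exists y : Y, true]) => [/existsP[y _]|/existsPn h]; first by exists y.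
move: hnu_sum; rewrite big1 => [|i _]; last by have := h i.
by move/eqP; rewrite eq_sym oner_eq0.
Qed.

Lemma K_gt0 x y : 0 < K x y.
Proof. by rewrite /Defs.kernel !mulr_gt0 ?expR_gt0. Qed.

Lemma c_le_C x y : c x y <= C.
Proof. exact: (le_bigmax 0 (fun p : X * Y => c p.1 p.2) (x, y)). Qed.

Lemma C_ge0 : 0 <= C.
Proof.
have [x _] := X0; have [y _] := Y0.
exact: le_trans (hc x y) (c_le_C x y).
Qed.

Lemma K_ub x y : K x y <= mu x * nu y.
Proof.
rewrite /Defs.kernel -mulrA ler_piMl //; first by rewrite mulr_ge0 // ltW.
by rewrite expR_le1 oppr_le0 divr_ge0 // ltW.
Qed.

Lemma K_lb x y : expR (- (C / eps)) * (mu x * nu y) <= K x y.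
Proof.
rewrite /Defs.kernel -mulrA ler_pM2r ?mulr_gt0 // ler_expR lerN2.
by rewrite ler_pM2r ?invr_gt0 // c_le_C.
Qed.

Lemma Dv_gt0 v x : (forall y, 0 < v y) -> 0 < Dv v x.
Proof.
move=> hv; have [y0 _] := Y0.
by apply: (sum_gt0_fin y0) => y; rewrite mulr_gt0 ?K_gt0.
Qed.

Lemma Tu_gt0 u y : (forall x, 0 < u x) -> 0 < Tu u y.
Proof.
move=> hu; have [x0 _] := X0.
by apply: (sum_gt0_fin x0) => x; rewrite mulr_gt0 ?K_gt0.
Qed.

Lemma uof_gt0 v x : (forall y, 0 < v y) -> 0 < uof v x.
Proof. by move=> hv; rewrite /u_of divr_gt0 // (Dv_gt0 x hv). Qed.

Lemma vof_gt0 u y : (forall x, 0 < u x) -> 0 < vof u y.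
Proof. by move=> hu; rewrite /vhat_of divr_gt0 // (Tu_gt0 y hu). Qed.

Lemma sv_pos l y : 0 < sv l y <= 1.
Proof.
elim: l y => [|l IH] y /=; first by rewrite ltr01 lexx.
rewrite /v_next lt_min ge_min; have /andP[h1 h2] := IH y.
rewrite h1 h2 /= andbT; apply: vof_gt0 => x; apply: uof_gt0 => y'.
by have /andP[] := IH y'.
Qed.

Lemma sv_gt0 l y : 0 < sv l y.
Proof. by have /andP[] := sv_pos l y. Qed.


Definition vh l := vof (uof (sv l)).

Lemma uof_mono (v v' : Y -> R) x : (forall y, 0 < v' y) ->
  (forall y, v' y <= v y) -> uof v x <= uof v' x.
Proof.
move=> h0 hle; have hv : forall y, 0 < v y by move=> y; exact: lt_le_trans (h0 y) (hle y).
rewrite /u_of ler_wpM2l ?(ltW (hmu_pos x)) // lef_pV2 ?posrE ?(Dv_gt0 x h0) ?(Dv_gt0 x hv) //.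
by apply: ler_sum => y _; rewrite ler_pM2l ?K_gt0.
Qed.

Lemma vof_mono (u u' : X -> R) y : (forall x, 0 < u x) ->
  (forall x, u x <= u' x) -> vof u' y <= vof u y.
Proof.
move=> h0 hle; have hu : forall x, 0 < u' x by move=> x; exact: lt_le_trans (h0 x) (hle x).
rewrite /vhat_of ler_wpM2l ?(ltW (hnu_pos y)) // lef_pV2 ?posrE ?(Tu_gt0 y h0) ?(Tu_gt0 y hu) //.
by apply: ler_sum => x _; rewrite ler_pM2l ?K_gt0.
Qed.

Lemma sv_dec l y : sv l.+1 y <= sv l y.
Proof. by rewrite /= /v_next ge_min lexx. Qed.

Lemma vh_dec l y : vh l.+1 y <= vh l y.
Proof.
apply: vof_mono => x; first by apply: uof_gt0 => y'; exact: sv_gt0.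
apply: uof_mono => y'; [exact: sv_gt0 | exact: sv_dec].
Qed.

Lemma svS l y : sv l.+1 y = Num.min (sv l y) (vh l y).
Proof. by []. Qed.

Lemma J l y : sv l y = 1 \/ vh l y <= sv l y.
Proof.
elim: l y => [|l IH] y; first by left.
rewrite svS; case: (leP (vh l y) (sv l y)) => h.
  by right; exact: vh_dec.
have e1 : sv l y = 1 by case: (IH y) => // h'; move: h; rewrite ltNge h'.
by left.
Qed.

Lemma ident (v : Y -> R) : (forall y, 0 < v y) ->
  \sum_y v y * Tu (uof v) y = 1.
Proof.
move=> hv; rewrite -hmu_sum.
under eq_bigr do rewrite /Tu big_distrr /=.
rewrite exchange_big /=; apply: eq_bigr => x _.
have hD := Dv_gt0 x hv.
rewrite (eq_bigr (fun y => uof v x * (K x y * v y))); last first.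
  by move=> y _; ring.
rewrite -big_distrr /= /u_of -/(Dv v x) divfK //.
by rewrite gt_eqF.
Qed.

Lemma Tu_vh l y : vh l y = nu y / Tu (uof (sv l)) y.
Proof. by []. Qed.

Lemma Ex l : exists y, sv l y = 1.
Proof.
elim: l => [|l [y1 h1]]; first by have [y _] := Y0; exists y.
case: (boolP [exists y, sv l.+1 y == 1]) => [/existsP[y /eqP hy]|/existsPn hn].
  by exists y.
exfalso.
have key : forall y, sv l y = 1 -> vh l y < sv l y.
  move=> y hy; rewrite hy; case: (ltP (vh l y) 1) => // h.
  by have := hn y; rewrite svS hy min_l // eqxx.
have hle : forall y, nu y <= sv l y * Tu (uof (sv l)) y.
  move=> y; rewrite -ler_pdivrMr ?Tu_gt0 //; last by move=> x; apply: uof_gt0 => y'; exact: sv_gt0.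
  rewrite -Tu_vh; case: (J l y) => [e|//]; exact: ltW (key y e).
have hlt : nu y1 < sv l y1 * Tu (uof (sv l)) y1.
  rewrite -ltr_pdivrMr ?Tu_gt0 //; last by move=> x; apply: uof_gt0 => y'; exact: sv_gt0.
  by rewrite -Tu_vh; exact: key.
have := ident (sv_gt0 l); rewrite -hnu_sum => e.
have : \sum_y nu y < \sum_y sv l y * Tu (uof (sv l)) y.
  rewrite (bigD1 y1) //= [X in _ < X](bigD1 y1) //=.
  by apply: ltr_leD => //; apply: ler_sum => y _.
by rewrite e ltxx.
Qed.

Lemma second l : (1 <= l)%N ->
  \sum_(x : X) sink_u mu nu c eps l x * mu x <= expR (C / eps).
Proof.
case: l => // m _; rewrite /sink_u /=.
have [y0 hy0] := Ex m.+1.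
have h1 : 1 <= vh m y0 by move: hy0; rewrite svS => e; have := le_min 1 (sv m y0) (vh m y0); rewrite e lexx => /esym/andP[].
have hu : forall x, 0 < uof (sv m) x by move=> x; apply: uof_gt0 => y'; exact: sv_gt0.
move: h1; rewrite Tu_vh ler_pdivlMr ?Tu_gt0 // mul1r => hT.
set M := \sum_x _.
have hM : expR (- (C / eps)) * nu y0 * M <= nu y0.
  apply: le_trans hT; rewrite /M big_distrr /=; apply: ler_sum => x _.
  have := K_lb x y0; have := hu x; have := hmu_pos x; have := hnu_pos y0.
  move=> a b d e.
  have -> : expR (- (C / eps)) * nu y0 * (uof (sv m) x * mu x) =
    expR (- (C / eps)) * (mu x * nu y0) * uof (sv m) x by ring.
  by rewrite ler_pM2r.
have ha : expR (- (C / eps)) * expR (C / eps) = 1 by rewrite -expRD addNr expR0.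
have hE := expR_gt0 (C / eps).
have hny := hnu_pos y0.
have : expR (- (C / eps)) * M <= 1.
  by rewrite -(ler_pM2r hny) mul1r mulrAC.
move=> h; rewrite -[M]mul1r -ha -mulrA [X in _ * X]mulrC mulrA.
by rewrite -[X in _ <= X]mul1r ler_pM2r.
Qed.

Definition Psi l := \sum_x mu x * ln (sink_u mu nu c eps l x).

Lemma su_gt0 l x : 0 < sink_u mu nu c eps l x.
Proof. by apply: uof_gt0 => y; exact: sv_gt0. Qed.

Lemma row_sum m x : \sum_y sink_pi mu nu c eps m x y =
  sink_u mu nu c eps m x * Dv (sv m) x.
Proof. rewrite /Dv big_distrr; apply: eq_bigr => y _. rewrite /sink_pi; symmetry; exact: mulrA. Qed.

Lemma step m : Psi m.+1 + 1 - sink_q mu nu c eps m.+1 <= Psi m.+2.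
Proof.
rewrite /sink_q -hmu_sum.
rewrite [X in _ - X](eq_bigr (fun x => sink_u mu nu c eps m.+1 x * Dv (sv m.+1) x)); last by move=> x _; exact: row_sum.
have h : forall x, mu x * ln (sink_u mu nu c eps m.+1 x) + mu x
    - sink_u mu nu c eps m.+1 x * Dv (sv m.+1) x
    <= mu x * ln (sink_u mu nu c eps m.+2 x).
  move=> x; set b := sink_u _ _ _ _ m.+1 x; set a := sink_u _ _ _ _ m.+2 x.
  have ha : 0 < a by exact: su_gt0.
  have hb : 0 < b by exact: su_gt0.
  have hD : 0 < Dv (sv m.+1) x by apply: Dv_gt0 => y; exact: sv_gt0.
  have hm := hmu_pos x.
  have ea : a = mu x / Dv (sv m.+1) x by [].
  have hl := ln_le_sub1 (divr_gt0 hb ha).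
  rewrite ln_div ?posrE // in hl.
  have e2 : b / a = b * Dv (sv m.+1) x / mu x.
    by rewrite ea invf_div mulrA.
  rewrite e2 in hl.
  have : mu x * (ln b - ln a) <= mu x * (b * Dv (sv m.+1) x / mu x - 1).
    by rewrite ler_pM2l.
  have -> : mu x * (b * Dv (sv m.+1) x / mu x - 1) = b * Dv (sv m.+1) x - mu x.
    by field; rewrite gt_eqF.
  lra.
have := @ler_sum _ _ (index_enum X) xpredT _ _ (fun x _ => h x).
by rewrite big_split /= big_split /= sumrN.
Qed.

Lemma Psi_ub m : Psi m.+1 <= C / eps.
Proof.
set M := \sum_x sink_u mu nu c eps m.+1 x * mu x.
have hM : 0 < M by have [x0 _] := X0; apply: (sum_gt0_fin x0) => x; rewrite mulr_gt0 ?su_gt0.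
have hle := second (ltn0Sn m); rewrite -/M in hle.
have hlnM : ln M <= C / eps.
  by rewrite -[X in _ <= X]expRK ler_ln ?posrE ?expR_gt0.
apply: le_trans hlnM.
have h : forall x, mu x * ln (sink_u mu nu c eps m.+1 x) <=
    mu x * ln M + (sink_u mu nu c eps m.+1 x * mu x) / M - mu x.
  move=> x; set u := sink_u _ _ _ _ _ x.
  have hu : 0 < u by exact: su_gt0.
  have hl := ln_le_sub1 (divr_gt0 hu hM).
  rewrite ln_div ?posrE // in hl.
  have hm := hmu_pos x.
  have : mu x * (ln u - ln M) <= mu x * (u / M - 1) by rewrite ler_pM2l.
  have -> : mu x * (u / M - 1) = u * mu x / M - mu x by field; rewrite gt_eqF.
  lra.
apply: (le_trans (@ler_sum _ _ (index_enum X) xpredT _ _ (fun x _ => h x))).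
rewrite big_split /= big_split /= sumrN -big_distrl -big_distrl /= -/M hmu_sum.
by rewrite divff ?gt_eqF // mul1r addrK.
Qed.

Lemma Psi1_ge0 : 0 <= Psi 1.
Proof.
apply: sumr_ge0 => x _; rewrite mulr_ge0 ?(ltW (hmu_pos x)) // ln_ge0 //.
rewrite /sink_u /= /u_of ler_pdivlMr; last by apply: Dv_gt0 => y; exact: ltr01.
rewrite mul1r; apply: le_trans (_ : \sum_y mu x * nu y <= _).
  by apply: ler_sum => y _; rewrite mulr1 K_ub.
by rewrite -big_distrr /= hnu_sum mulr1.
Qed.

Lemma count N qt : (forall j, (0 < j)%N -> (j <= N)%N -> sink_q mu nu c eps j < qt) ->
  Psi 1 + N%:R * (1 - qt) <= Psi N.+1.
Proof.
elim: N => [|N IH] h; first by rewrite mul0r addr0.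
have h1 := IH (fun j hj hjN => h j hj (leqW hjN)).
have h2 := step N.
have h3 := h N.+1 (ltn0Sn N) (leqnn _).
have e : N.+1%:R = N%:R + 1 :> R by rewrite mulrSr.
rewrite e.
lra.
Qed.

Lemma main_sec (qt : R) (hqt0 : 0 < qt) (hqt1 : qt < 1) :
  (exists n : nat, (1 <= n)%N /\
     n%:R <= 2 + cmax c / (eps * (1 - qt)) /\
     qt <= sink_q mu nu c eps n)
  /\ (forall l : nat, (1 <= l)%N ->
       \sum_(x : X) sink_u mu nu c eps l x * mu x <= expR (cmax c / eps)).
Proof.
split; last exact: second.
set B := cmax c / (eps * (1 - qt)).
have hq : 0 < 1 - qt by lra.
have hB0 : 0 <= B by rewrite /B divr_ge0 ?C_ge0 // mulr_ge0 // ltW.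
set N := (Num.trunc B).+1.
have hNB : B < N%:R by exact: truncnS_gt.
have hNB2 : N%:R <= B + 1.
  rewrite /N mulrSr lerD2r; by rewrite truncn_le.
case: (boolP [exists j : 'I_N.+1, (0 < j)%N && (qt <= sink_q mu nu c eps j)]).
  move=> /existsP[j /andP[hj hqj]]; exists j; split => //; split => //.
  apply: le_trans (_ : N%:R <= _); first by rewrite ler_nat -ltnS ltn_ord.
  lra.
move=> /existsPn hn; exfalso.
have hall : forall j, (0 < j)%N -> (j <= N)%N -> sink_q mu nu c eps j < qt.
  move=> j hj hjN; have := hn (Ordinal (hjN : (j < N.+1)%N)).
  by rewrite /= hj /= -ltNge.
have h1 := count hall; have h2 := Psi_ub N; have h3 := Psi1_ge0.
have : N%:R * (1 - qt) <= C / eps by lra.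
rewrite -ler_pdivlMr // -mulrA -invfM -/B => h.
by move: hNB; rewrite ltNge h.
Qed.

End Proofs.

Unset Implicit Arguments. Set Strict Implicit.

Theorem mainTheorem4 (R : realType) (X Y : finType)
  (mu : X -> R) (nu : Y -> R) (c : X -> Y -> R) (eps : R)
  (hmu_pos : forall x, 0 < mu x) (hmu_sum : \sum_(x : X) mu x = 1)
  (hnu_pos : forall y, 0 < nu y) (hnu_sum : \sum_(y : Y) nu y = 1)
  (hc : forall x y, 0 <= c x y) (heps : 0 < eps) (qt : R)
  (hqt0 : 0 < qt) (hqt1 : qt < 1) :
  (exists n : nat, (1 <= n)%N /\
     n%:R <= 2 + cmax c / (eps * (1 - qt)) /\
     qt <= sink_q mu nu c eps n)
  /\ (forall l : nat, (1 <= l)%N ->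
       \sum_(x : X) sink_u mu nu c eps l x * mu x <= expR (cmax c / eps)).
Proof.
exact: (main_sec hmu_pos hmu_sum hnu_pos hnu_sum hc heps hqt0 hqt1).
Qed.
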